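(* Let $A$ be a finite alphabet and let $M,N$ be regular languages over $A(2,\$)$, each consisting of words of the form $(w_1,w_2)\delta_A^L$ with $w_1,w_2\in A^*$. Suppose there are constants $C,C'$ such that $(w_1,w_2)\delta_A^L\in M$ implies $||w_1|-|w_2||\leq C$, and $(w_1',w_2')\delta_A^L\in N$ implies $||w_1'|-|w_2'||\leq C'$. Then the language $M\odot' N=\{(w_1w_1',w_2w_2')\delta_A^L:(w_1,w_2)\delta_A^L\in M,\ (w_1',w_2')\delta_A^L\in N\}$ is regular.
   Context: $A^*$ is the free monoid on $A$, $|w|$ is length. Let $\$\notin A$ and $A(2,\$)=(A\cup\{\$\})^2\setminus\{(\$,\$)\}$. For $\alpha,\beta\in A^*$, $(\alpha,\beta)\delta_A^L$ is the word over $A(2,\$)$ obtained by padding the shorter of $\alpha,\beta$ on the left with $\$$'s to equal length and reading the pairs of letters position by position. Regular means accepted by a finite state automaton. *)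

(* Defs.v *)
From mathcomp Require Import all_boot.
Set Implicit Arguments. Unset Strict Implicit. Unset Printing Implicit Defensive.

(* The padded alphabet A(2,$) = (A ∪ {$})^2 \ {($,$)}; $ is encoded as None. *)
Definition padA (A : finType) : predArgType :=
  {p : option A * option A | p != (None, None)}.

Definition lpad (A : Type) (n : nat) (w : seq A) : seq (option A) :=
  nseq (n - size w) None ++ map Some w.

Definition delta_raw (A : Type) (w1 w2 : seq A) : seq (option A * option A) :=
  let n := maxn (size w1) (size w2) in zip (lpad n w1) (lpad n w2).

(* (w1,w2) delta_A^L as a word over A(2,$).  Every letter of delta_raw
   differs from ($,$), so pmap insub keeps all of them. *)
Definition deltaL (A : finType) (w1 w2 : seq A) : seq (padA A) :=
  pmap insub (delta_raw w1 w2).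

Definition regular (S : finType) (L : seq S -> Prop) : Prop :=
  exists (Q : finType) (q0 : Q) (F : pred Q) (d : Q -> S -> Q),
    forall u, L u <-> F (foldl d q0 u).

Definition absdiff (m n : nat) : nat := maxn m n - minn m n.

Definition odot' (A : finType) (M N : seq (padA A) -> Prop) : seq (padA A) -> Prop :=
  fun u => exists w1 w2 w1' w2' : seq A,
    [/\ u = deltaL (w1 ++ w1') (w2 ++ w2'), M (deltaL w1 w2) & N (deltaL w1' w2')].

(* Main.v *)
Require Import Defs.
From mathcomp Require Import all_boot zify.
From Stdlib Require Import ClassicalEpsilon.

Lemma take_zip (S T : Type) n (s : seq S) (t : seq T) :
  take n (zip s t) = zip (take n s) (take n t).
Proof.
elim: t s n => [|y t IH] s n.
  by case: n => [|n]; case: s => [|x s] //=; case: (take n s).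
case: s => [|x s]; first by case: n => [|n] //=; case: (take n t).
by case: n => //= n; rewrite IH.
Qed.

Lemma drop_zip (S T : Type) n (s : seq S) (t : seq T) :
  drop n (zip s t) = zip (drop n s) (drop n t).
Proof.
elim: t s n => [|y t IH] s n.
  by case: n => [|n]; case: s => [|x s] //=; case: (drop n s).
case: s => [|x s]; first by case: n => [|n] //=; case: (drop n t).
by case: n => //= n; rewrite IH.
Qed.

Definition asb (P : Prop) : bool := if excluded_middle_informative P then true else false.
Lemma asbP (P : Prop) : asb P <-> P.
Proof. rewrite /asb; case: excluded_middle_informative => //. Qed.

Lemma factor_regular (S Q : finType) (L : seq S -> Prop) (R : seq S -> Q -> Prop)
  (Acc : Q -> seq S -> Prop) :
  (forall u v, L (u ++ v) <-> exists q, R u q /\ Acc q v) -> regular L.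
Proof.
move=> HL.
pose h u := [set q | asb (R u q)].
have Hh : forall u u', h u = h u' -> forall v, L (u ++ v) -> L (u' ++ v).
  move=> u u' E v /HL [q [Ru Aq]]; apply/HL; exists q; split=> //.
  have : q \in h u by rewrite inE; apply/asbP.
  by rewrite E inE => /asbP.
pose rep P := epsilon (inhabits [::]) (fun u => h u = P).
have repE u : h (rep (h u)) = h u.
  by apply: (epsilon_spec (inhabits [::]) (fun w => h w = h u)); exists u.
exists {set Q}, (h [::]), (fun P => asb (L (rep P))), (fun P a => h (rep P ++ [:: a])).
have key : forall u, exists u0, foldl (fun P a => h (rep P ++ [:: a])) (h [::]) u = h u0 /\
    (forall v, L (u0 ++ v) <-> L (u ++ v)).
  elim/last_ind => [|u a [u0 [E1 E2]]]; first by exists [::].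
  exists (rep (h u0) ++ [:: a]); rewrite foldl_rcons E1; split=> // v.
  rewrite -catA -cats1 -catA /=.
  split=> H.
    by apply/E2; apply: (Hh (rep (h u0))) => //; rewrite repE.
  by apply: (Hh u0); [rewrite repE | apply/E2].
move=> u; have [u0 [E1 E2]] := key u; rewrite E1.
have E3 := E2 [::]; rewrite !cats0 in E3.
split=> H.
  apply/asbP; have := Hh u0 _ (esym (repE u0)) [::]; rewrite !cats0; apply; exact/E3.
move/asbP: H => H; have := Hh _ u0 (repE u0) [::]; rewrite !cats0 => H2.
exact/E3/H2.
Qed.
Set Implicit Arguments. Unset Strict Implicit.

Section Glue.
Variable A : finType.
Implicit Types X Y : seq A.

Definition pad X Y := maxn (size X) (size Y) - size X.

Lemma delta_rawE X Y : delta_raw X Y =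
  zip (nseq (pad X Y) None ++ map Some X) (nseq (pad Y X) None ++ map Some Y).
Proof. by rewrite /delta_raw /lpad /pad [maxn (size Y) _]maxnC. Qed.

Lemma track (e t t' : nat) X X' : (t < e -> t' = t) -> (e <= t -> e <= t') ->
  take t (nseq e None ++ map Some X) ++ drop t' (nseq e None ++ map Some X') =
  nseq e None ++ map Some (take (t - e) X ++ drop (t' - e) X').
Proof.
move=> H1 H2; case: (ltnP t e) => Hte.
  rewrite (H1 Hte) take_cat drop_cat size_nseq Hte take_nseq; last exact: ltnW.
  rewrite drop_nseq.
  have -> : t - e = 0 by lia.
  rewrite take0 drop0 catA -nseqD; congr (nseq _ _ ++ _); lia.
have Ht' := H2 Hte.
rewrite take_cat drop_cat size_nseq ltnNge Hte /= ltnNge Ht' /= -map_take -map_drop -catA map_cat //.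
Qed.

Lemma pad_facts X Y : size X + pad X Y = size Y + pad Y X /\
  minn (pad X Y) (pad Y X) = 0 /\ maxn (size X) (size Y) = size X + pad X Y.
Proof. rewrite /pad; split; [lia|split; lia]. Qed.

Lemma arith_glue e f a b a' b' t t' : a + e = b + f -> a' + e = b' + f -> minn e f = 0 ->
  t <= a + e -> t' <= a' + e -> minn e t = minn e t' -> minn f t = minn f t' ->
  maxn (minn (t - e) a + (a' - (t' - e))) (minn (t - f) b + (b' - (t' - f)))
     - (minn (t - e) a + (a' - (t' - e))) = e /\
  maxn (minn (t - f) b + (b' - (t' - f))) (minn (t - e) a + (a' - (t' - e)))
     - (minn (t - f) b + (b' - (t' - f))) = f.
Proof.
move=> H1 H2 H3 H4 H5 H6 H7.
have -> : minn (t - e) a = t - e by lia.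
have -> : minn (t - f) b = t - f by lia.
have H8 : (t < e -> t' = t) by lia.
have H9 : (e <= t -> e <= t') by lia.
have H10 : (t < f -> t' = t) by lia.
have H11 : (f <= t -> f <= t') by lia.
have K : (t - e) + (a' - (t' - e)) + e = (t - f) + (b' - (t' - f)) + f by lia.
move: K; set x := _ + _; set y := _ + _ => K.
clear -K H3; split; lia.
Qed.

Lemma glue_raw X Y X' Y' t t' :
  pad X Y = pad X' Y' -> pad Y X = pad Y' X' ->
  t <= maxn (size X) (size Y) -> t' <= maxn (size X') (size Y') ->
  minn (pad X Y) t = minn (pad X Y) t' -> minn (pad Y X) t = minn (pad Y X) t' ->
  take t (delta_raw X Y) ++ drop t' (delta_raw X' Y') =
  delta_raw (take (t - pad X Y) X ++ drop (t' - pad X Y) X')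
            (take (t - pad Y X) Y ++ drop (t' - pad Y X) Y').
Proof.
move=> He Hf Ht Ht' Hme Hmf.
have [P1 [P2 P3]] := pad_facts X Y.
have [P1' [P2' P3']] := pad_facts X' Y'.
rewrite !delta_rawE take_zip drop_zip -zip_cat; last first.
  by rewrite !size_take_min !size_cat !size_nseq !size_map addnC P1 addnC.
rewrite -He -Hf !track; try (move=> ?; lia).
move: (pad X Y) (pad Y X) He Hf Ht Ht' Hme Hmf P1 P2 P3 P1' P2' P3' => e f He Hf Ht Ht' Hme Hmf P1 P2 P3 P1' P2' P3'.
rewrite -He -Hf in P1' P2' P3'.
rewrite P3 in Ht; rewrite P3' in Ht'.
have [A1 A2] := @arith_glue e f (size X) (size Y) (size X') (size Y') t t' P1 P1' P2 Ht Ht' Hme Hmf.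
rewrite /pad !size_cat !size_take_min !size_drop A1 A2 //.
Qed.

Lemma all_delta X Y : all (fun p => p != (None, None)) (delta_raw X Y).
Proof.
rewrite delta_rawE.
have [E|E] : pad X Y = 0 \/ pad Y X = 0 by rewrite /pad; lia.
  rewrite E /=; move: (nseq _ _ ++ _) => B; clear E.
  by elim: X B => [|x X IH] [|b B] //=.
rewrite E /=; move: (nseq (pad X Y) None ++ _) => B; clear E.
by elim: Y B => [|y Y IH] [|b B] //=; rewrite IH andbT; case: b.
Qed.

Lemma val_deltaL X Y : map val (deltaL X Y) = delta_raw X Y.
Proof.
rewrite /deltaL (pmap_filter (@insubK _ _ (padA A))).
apply/all_filterP; apply: sub_all (all_delta X Y) => p Hp.
by rewrite /= insubT.
Qed.

Lemma size_deltaL X Y : size (deltaL X Y) = maxn (size X) (size Y).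
Proof.
rewrite -(size_map val) val_deltaL delta_rawE size_zip !size_cat !size_nseq !size_map /pad.
lia.
Qed.

Lemma glueL X Y X' Y' t t' :
  pad X Y = pad X' Y' -> pad Y X = pad Y' X' ->
  t <= maxn (size X) (size Y) -> t' <= maxn (size X') (size Y') ->
  minn (pad X Y) t = minn (pad X Y) t' -> minn (pad Y X) t = minn (pad Y X) t' ->
  take t (deltaL X Y) ++ drop t' (deltaL X' Y') =
  deltaL (take (t - pad X Y) X ++ drop (t' - pad X Y) X')
            (take (t - pad Y X) Y ++ drop (t' - pad Y X) Y').
Proof.
move=> *; apply: (inj_map val_inj).
by rewrite map_cat map_take map_drop !val_deltaL glue_raw.
Qed.
End Glue.
Set Implicit Arguments. Unset Strict Implicit.

Section Buf.
Variable T : Type.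
Implicit Types w z : seq T.

Lemma take_split' p k w : p <= k -> take k w = take p w ++ drop p (take k w).
Proof. by move=> H; rewrite -{1}(cat_take_drop p (take k w)) take_takel. Qed.

Lemma drop_split' r k z : r <= k -> drop r z = drop r (take k z) ++ drop k z.
Proof.
elim: z r k => [|x z IH] r k; first by rewrite /=; case: r; case: k.
case: r => [|r]; first by rewrite !drop0 cat_take_drop.
case: k => [|k] //= H; exact: IH.
Qed.

Lemma drop_catl n w z : n <= size w -> drop n (w ++ z) = drop n w ++ z.
Proof.
rewrite drop_cat leq_eqVlt => /orP [/eqP ->|->] //.
by rewrite ltnn subnn drop0 drop_size.
Qed.

Lemma bufglue w w' z z' al aE p1 p2 r1 r2 :
  p1 <= minn al (size w) -> r1 <= minn aE (size z) ->
  (al <= size w) = (aE <= size z) ->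
  p2 <= al - size w -> r2 <= aE - size z ->
  drop p1 (take al w) = drop r1 (take aE z) ->
  drop p2 (take (al - size w) w') = drop r2 (take (aE - size z) z') ->
  (take p1 w ++ drop r1 z) ++ (take p2 w' ++ drop r2 z') =
  take al (w ++ w') ++ drop aE (z ++ z').
Proof.
move=> H1 H2 Hf H3 H4 B1 B2.
case: (boolP (al <= size w)) => Hal.
  have Hz : aE <= size z by rewrite -Hf.
  have -> : p2 = 0 by lia.
  have -> : r2 = 0 by lia.
  rewrite take0 drop0 takel_cat // drop_catl // (@take_split' p1 al w); last by lia.
  rewrite B1 (@drop_split' r1 aE z); last by lia.
  by rewrite -!catA /=.
have Hz : ~~ (aE <= size z) by rewrite -Hf.
rewrite take_cat drop_cat.
have -> : (al < size w) = false by lia.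
have -> : (aE < size z) = false by lia.
rewrite -{2}(cat_take_drop p1 w).
have -> : drop p1 w = drop r1 z.
  rewrite -(@take_oversize _ al w); last by lia.
  rewrite B1 take_oversize //; lia.
rewrite (@take_split' p2 (al - size w) w'); last by lia.
rewrite B2 (@drop_split' r2 (aE - size z) z'); last by lia.
by rewrite !catA.
Qed.
End Buf.
Set Implicit Arguments. Unset Strict Implicit.

Lemma padn_facts a b : exists g h, [/\ maxn a b - a = g, maxn b a - b = h,
  maxn a b = a + g, a + g = b + h & minn g h = 0 /\ absdiff a b = g + h].
Proof. exists (maxn a b - a), (maxn b a - b); rewrite /absdiff; split => //; lia. Qed.

Lemma bufbound a g h al be i D : i = minn (a + g) (minn (al + g) (be + h)) ->
  al <= be + D -> minn al a - (i - g) <= D + g.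
Proof. move=> ->; lia. Qed.

Section Side.
Variable A : finType.
Variables C C' : nat.
Definition K := 3 * (C + C').

Definition cutM (w1 w2 v1 v2 : seq A) t :=
  minn (maxn (size w1) (size w2)) (minn (t - pad (w1 ++ v1) (w2 ++ v2) + pad w1 w2)
                                        (t - pad (w2 ++ v2) (w1 ++ v1) + pad w2 w1)).
Definition cutN (w1 w2 v1 v2 : seq A) t :=
  minn (maxn (size v1) (size v2))
    (minn (t - pad (w1 ++ v1) (w2 ++ v2) - size w1 + pad v1 v2)
          (t - pad (w2 ++ v2) (w1 ++ v1) - size w2 + pad v2 v1)).

Definition Bnd (w1 w2 v1 v2 : seq A) :=
  absdiff (size w1) (size w2) <= C /\ absdiff (size v1) (size v2) <= C'.

Lemma side w1 w2 v1 v2 t : Bnd w1 w2 v1 v2 ->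
  t <= maxn (size (w1 ++ v1)) (size (w2 ++ v2)) ->
  let X := w1 ++ v1 in let Y := w2 ++ v2 in
  let i := cutM w1 w2 v1 v2 t in let j := cutN w1 w2 v1 v2 t in
  (i - pad w1 w2 <= minn (t - pad X Y) (size w1)) /\
  (i - pad w2 w1 <= minn (t - pad Y X) (size w2)) /\
  i <= maxn (size w1) (size w2) /\
  j - pad v1 v2 <= (t - pad X Y) - size w1 /\
  j - pad v2 v1 <= (t - pad Y X) - size w2 /\
  j <= maxn (size v1) (size v2) /\
  pad X Y <= K /\ pad Y X <= K /\ pad w1 w2 <= K /\ pad w2 w1 <= K /\
  pad v1 v2 <= K /\ pad v2 v1 <= K /\
  minn (t - pad X Y) (size w1) - (i - pad w1 w2) <= K /\
  minn (t - pad Y X) (size w2) - (i - pad w2 w1) <= K /\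
  minn (t - pad X Y - size w1) (size v1) - (j - pad v1 v2) <= K /\
  minn (t - pad Y X - size w2) (size v2) - (j - pad v2 v1) <= K.
Proof.
move=> [H1 H2] Ht /=; rewrite /cutM /cutN /pad !size_cat in Ht *.
move: (size w1) (size w2) (size v1) (size v2) H1 H2 Ht => a b a' b' H1 H2 Ht.
have [g [h [E1 E2 E3 E4 [E5 E6]]]] := padn_facts a b.
have [g' [h' [F1 F2 F3 F4 [F5 F6]]]] := padn_facts a' b'.
have [e [f [G1 G2 G3 G4 [G5 G6]]]] := padn_facts (a + a') (b + b').
rewrite E1 E2 E3 F1 F2 F3 G1 G2 G3 in Ht *; rewrite E6 in H1; rewrite F6 in H2.
clear E1 E2 E3 F1 F2 F3 G1 G2 G3 E6 F6 G6.
have Hef : e + f <= C + C' by lia.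
have Hab : t - e <= t - f + (e + f) by lia.
have Hba : t - f <= t - e + (e + f) by lia.
have Hab' : t - e - a <= t - f - b + (e + f + g + h) by lia.
have Hba' : t - f - b <= t - e - a + (e + f + g + h) by lia.
have Hta : t - e <= a + a' by lia.
move: (t - e) (t - f) Hab Hba Hab' Hba' Hta => al be Hab Hba Hab' Hba' Hta.
clear Ht G4 G5.
set i := minn (a + g) _; set j := minn (a' + g') _.
have Bi1 := bufbound (erefl i) Hab.
have Bi2 : minn be b - (i - h) <= e + f + h.
  apply: (bufbound (a := b) (g := h) (h := g) (al := be) (be := al)) Hba.
  by rewrite /i E4 [minn (al + g) _]minnC.
have Bj1 := bufbound (a := a') (g := g') (h := h') (i := j) (al := al - a) (be := be - b) erefl Hab'.
have Bj2 : minn (be - b) b' - (j - h') <= e + f + g + h + h'.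
  apply: (bufbound (a := b') (g := h') (h := g') (al := be - b) (be := al - a)) Hba'.
  by rewrite /j F4 [minn (al - a + g') _]minnC.
rewrite /K.
split; first by rewrite /i; clear; lia.
split; first by rewrite /i; clear -E4; lia.
split; first by rewrite /i; clear; lia.
split; first by rewrite /j; clear; lia.
split; first by rewrite /j; clear -F4; lia.
split; first by rewrite /j; clear; lia.
do 6 (split; first by clear -Hef H1 H2; lia).
split; first by clear -Bi1 Hef H1 H2; lia.
split; first by clear -Bi2 Hef H1 H2; lia.
split; first by clear -Bj1 Hef H1 H2; lia.
by clear -Bj2 Hef H1 H2; lia.
Qed.
End Side.
Set Implicit Arguments. Unset Strict Implicit.

Section Main.
Variables (A : finType) (M N : seq (padA A) -> Prop) (C C' : nat).
Variables (Q1 : finType) (s1 : Q1) (F1 : pred Q1) (d1 : Q1 -> padA A -> Q1).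
Variables (Q2 : finType) (s2 : Q2) (F2 : pred Q2) (d2 : Q2 -> padA A -> Q2).
Hypothesis hM : forall u, M u <-> F1 (foldl d1 s1 u).
Hypothesis hN : forall u, N u <-> F2 (foldl d2 s2 u).

Local Notation KK := (K C C').
Definition enc (n : nat) : 'I_KK.+1 := inord n.
Definition BB := {ffun 'I_KK -> option A}.
Definition encs (s : seq A) : BB := [ffun j : 'I_KK => nth None (map Some s) j].

Lemma enc_inj m n : enc m = enc n -> m <= KK -> n <= KK -> m = n.
Proof. by move=> /(congr1 val) E Hm Hn; move: E; rewrite /enc /= !inordK. Qed.

Lemma nth_some_none (s : seq A) i : (nth None (map Some s) i == None) = (size s <= i).
Proof. by elim: s i => [|x s IH] [|i] //=; rewrite IH. Qed.

Lemma encs_inj s s' : encs s = encs s' -> size s <= KK -> size s' <= KK -> s = s'.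
Proof.
move=> E Hs Hs'.
have E' : forall j, j < KK -> nth None (map Some s) j = nth None (map Some s') j.
  by move=> j Hj; have := congr1 (fun f : BB => f (Ordinal Hj)) E; rewrite !ffunE.
have Hsz : size s = size s'.
  case: (ltngtP (size s) (size s')) => // H.
    have := E' (size s) (leq_trans H Hs').
    move=> /(congr1 (fun o => o == None)); rewrite !nth_some_none leqnn.
    by rewrite leqNgt H.
  have := E' (size s') (leq_trans H Hs).
  move=> /(congr1 (fun o => o == None)); rewrite !nth_some_none leqnn.
  by rewrite leqNgt H.
apply: (inj_map (@Some_inj _)); apply: (eq_from_nth (x0 := None)).
  by rewrite !size_map.
by move=> i; rewrite size_map => Hi; apply: E'; apply: leq_trans Hs.
Qed.

Definition Qt := (Q1 * Q2 * 'I_KK.+1 * 'I_KK.+1 * 'I_KK.+1 * 'I_KK.+1 * 'I_KK.+1 * 'I_KK.+1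
   * 'I_KK.+1 * 'I_KK.+1 * 'I_KK.+1 * bool * bool * BB * BB * BB * BB)%type.

Definition absQ (w1 w2 v1 v2 : seq A) (t : nat) : Qt :=
 (foldl d1 s1 (take (cutM w1 w2 v1 v2 t) (deltaL w1 w2)),
  foldl d2 s2 (take (cutN w1 w2 v1 v2 t) (deltaL v1 v2)),
  enc (pad (w1 ++ v1) (w2 ++ v2)), enc (pad (w2 ++ v2) (w1 ++ v1)), enc (minn t KK),
  enc (pad w1 w2), enc (pad w2 w1), enc (minn (cutM w1 w2 v1 v2 t) KK),
  enc (pad v1 v2), enc (pad v2 v1), enc (minn (cutN w1 w2 v1 v2 t) KK),
  t - pad (w1 ++ v1) (w2 ++ v2) <= size w1, t - pad (w2 ++ v2) (w1 ++ v1) <= size w2,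
  encs (drop (cutM w1 w2 v1 v2 t - pad w1 w2) (take (t - pad (w1 ++ v1) (w2 ++ v2)) w1)),
  encs (drop (cutN w1 w2 v1 v2 t - pad v1 v2) (take (t - pad (w1 ++ v1) (w2 ++ v2) - size w1) v1)),
  encs (drop (cutM w1 w2 v1 v2 t - pad w2 w1) (take (t - pad (w2 ++ v2) (w1 ++ v1)) w2)),
  encs (drop (cutN w1 w2 v1 v2 t - pad v2 v1) (take (t - pad (w2 ++ v2) (w1 ++ v1) - size w2) v2))).

Lemma glue w1 w2 v1 v2 z1 z2 y1 y2 t t' :
 Bnd C C' w1 w2 v1 v2 -> Bnd C C' z1 z2 y1 y2 ->
 t <= maxn (size (w1 ++ v1)) (size (w2 ++ v2)) ->
 t' <= maxn (size (z1 ++ y1)) (size (z2 ++ y2)) ->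
 absQ w1 w2 v1 v2 t = absQ z1 z2 y1 y2 t' ->
 M (deltaL z1 z2) -> N (deltaL y1 y2) ->
 odot' M N (take t (deltaL (w1 ++ v1) (w2 ++ v2)) ++ drop t' (deltaL (z1 ++ y1) (z2 ++ y2))).
Proof.
move=> BD BE Ht Ht' Habs HM HN.
have [S1 [S2 [S3 [S4 [S5 [S6 [S7 [S8 [S9 [S10 [S11 [S12 [S13 [S14 [S15 S16]]]]]]]]]]]]]]] := side BD Ht.
have [T1 [T2 [T3 [T4 [T5 [T6 [T7 [T8 [T9 [T10 [T11 [T12 [T13 [T14 [T15 T16]]]]]]]]]]]]]]] := side BE Ht'.
case: Habs => Hq1 Hq2 He Hf Htc Hg Hh Hi Hg' Hh' Hj Hfx Hfy Hb1 Hb2 Hb3 Hb4.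
move/enc_inj: He => /(_ S7 T7) He.
move/enc_inj: Hf => /(_ S8 T8) Hf.
move/enc_inj: Htc => /(_ (geq_minr _ _) (geq_minr _ _)) Htc.
move/enc_inj: Hg => /(_ S9 T9) Hg.
move/enc_inj: Hh => /(_ S10 T10) Hh.
move/enc_inj: Hi => /(_ (geq_minr _ _) (geq_minr _ _)) Hi.
move/enc_inj: Hg' => /(_ S11 T11) Hg'.
move/enc_inj: Hh' => /(_ S12 T12) Hh'.
move/enc_inj: Hj => /(_ (geq_minr _ _) (geq_minr _ _)) Hj.
move/encs_inj: Hb1; rewrite !size_drop !size_take_min => /(_ S13 T13) Hb1.
move/encs_inj: Hb2; rewrite !size_drop !size_take_min => /(_ S15 T15) Hb2.
move/encs_inj: Hb3; rewrite !size_drop !size_take_min => /(_ S14 T14) Hb3.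
move/encs_inj: Hb4; rewrite !size_drop !size_take_min => /(_ S16 T16) Hb4.
rewrite -He -Hf -Hg -Hh -Hg' -Hh' in T1 T2 T4 T5 Hb1 Hb2 Hb3 Hb4 Hfx Hfy.
set i := cutM w1 w2 v1 v2 t in S1 S2 S3 Hq1 Hb1 Hb3 Hi *.
set iE := cutM z1 z2 y1 y2 t' in T1 T2 T3 Hq1 Hb1 Hb3 Hi *.
set j := cutN w1 w2 v1 v2 t in S4 S5 S6 Hq2 Hb2 Hb4 Hj *.
set jE := cutN z1 z2 y1 y2 t' in T4 T5 T6 Hq2 Hb2 Hb4 Hj *.
exists (take (i - pad w1 w2) w1 ++ drop (iE - pad w1 w2) z1),
       (take (i - pad w2 w1) w2 ++ drop (iE - pad w2 w1) z2),
       (take (j - pad v1 v2) v1 ++ drop (jE - pad v1 v2) y1),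
       (take (j - pad v2 v1) v2 ++ drop (jE - pad v2 v1) y2).
split.
- have Hme : minn (pad (w1 ++ v1) (w2 ++ v2)) t = minn (pad (w1 ++ v1) (w2 ++ v2)) t' by clear -Htc S7; lia.
  have Hmf : minn (pad (w2 ++ v2) (w1 ++ v1)) t = minn (pad (w2 ++ v2) (w1 ++ v1)) t' by clear -Htc S8; lia.
  rewrite (glueL He Hf Ht Ht' Hme Hmf); congr deltaL; symmetry; apply: bufglue => //.
- have Hm1 : minn (pad w1 w2) i = minn (pad w1 w2) iE by clear -Hi S9; lia.
  have Hm2 : minn (pad w2 w1) i = minn (pad w2 w1) iE by clear -Hi S10; lia.
  apply/hM; rewrite -(glueL Hg Hh S3 T3 Hm1 Hm2) foldl_cat Hq1 -foldl_cat cat_take_drop.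
  exact/hM.
- have Hm1 : minn (pad v1 v2) j = minn (pad v1 v2) jE by clear -Hj S11; lia.
  have Hm2 : minn (pad v2 v1) j = minn (pad v2 v1) jE by clear -Hj S12; lia.
  apply/hN; rewrite -(glueL Hg' Hh' S6 T6 Hm1 Hm2) foldl_cat Hq2 -foldl_cat cat_take_drop.
  exact/hN.
Qed.
End Main.
Set Implicit Arguments. Unset Strict Implicit.

Theorem mainTheorem3 (A : finType) (M N : seq (padA A) -> Prop) (C C' : nat) :
  regular M -> regular N ->
  (forall u, M u -> exists w1 w2 : seq A, u = deltaL w1 w2) ->
  (forall u, N u -> exists w1 w2 : seq A, u = deltaL w1 w2) ->
  (forall w1 w2 : seq A, M (deltaL w1 w2) -> absdiff (size w1) (size w2) <= C) ->
  (forall w1 w2 : seq A, N (deltaL w1 w2) -> absdiff (size w1) (size w2) <= C') ->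
  regular (odot' M N).
Proof.
move=> [Q1 [s1 [F1 [d1 hM]]]] [Q2 [s2 [F2 [d2 hN]]]] _ _ bM bN.
pose ab := absQ C C' s1 d1 s2 d2.
apply: (@factor_regular _ _ _
  (fun u q => exists w1 w2 v1 v2 t, [/\ Bnd C C' w1 w2 v1 v2,
      t <= maxn (size (w1 ++ v1)) (size (w2 ++ v2)),
      u = take t (deltaL (w1 ++ v1) (w2 ++ v2)) & q = ab w1 w2 v1 v2 t])
  (fun q v => exists z1 z2 y1 y2 t', [/\ Bnd C C' z1 z2 y1 y2,
      t' <= maxn (size (z1 ++ y1)) (size (z2 ++ y2)),
      v = drop t' (deltaL (z1 ++ y1) (z2 ++ y2)), q = ab z1 z2 y1 y2 t' &
      M (deltaL z1 z2) /\ N (deltaL y1 y2)])).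
move=> u v; split.
  case=> w1 [w2 [v1 [v2 [E HM HN]]]].
  have B : Bnd C C' w1 w2 v1 v2 by split; [exact: bM | exact: bN].
  have Hs : size u <= maxn (size (w1 ++ v1)) (size (w2 ++ v2)).
    by rewrite -size_deltaL -E size_cat leq_addr.
  exists (ab w1 w2 v1 v2 (size u)); split.
    exists w1, w2, v1, v2, (size u); split => //.
    by rewrite -E take_size_cat.
  exists w1, w2, v1, v2, (size u); split => //.
  by rewrite -E drop_size_cat.
case=> q [[w1 [w2 [v1 [v2 [t [B Ht -> ->]]]]]] [z1 [z2 [y1 [y2 [t' [B' Ht' -> Eq [HM HN]]]]]]]].
exact: (glue hM hN B B' Ht Ht' Eq HM HN).
Qed.
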